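(* Let $a,b>0$. (i) If $0\le v\le 1/2$ and $a\ge b$, then $L(a,b)\le \frac{1}{2}A_v(a,b)+\frac{1}{2}G_v(a,b)$. (ii) If $1/2\le v\le 1$ and $a\le b$, then $L(a,b)\le \frac{1}{2}A_v(a,b)+\frac{1}{2}G_v(a,b)$.
   Context: For $a,b>0$ and $0\le v\le 1$: $A_v(a,b):=(1-v)a+vb$, $G_v(a,b):=a^{1-v}b^v$, and the logarithmic mean $L(a,b):=\frac{a-b}{\log a-\log b}$ for $a\neq b$, $L(a,a):=a$. *)

(* Defs.v *)
From Stdlib Require Import Reals.
Open Scope R_scope.

Definition Amean (v a b : R) : R := (1 - v) * a + v * b.

Definition Gmean (v a b : R) : R := Rpower a (1 - v) * Rpower b v.

Definition Lmean (a b : R) : R :=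
  if Req_EM_T a b then a else (a - b) / (ln a - ln b).

(* Main.v *)
Require Import Defs.
From Stdlib Require Import Reals.
From Stdlib Require Import Lra Psatz.
From Coquelicot Require Import Coquelicot.
Open Scope R_scope.

Lemma key_r (r : R) : 1 < r -> 2 * (r - 1) / (r + 1) <= ln r.
Proof.
  intro Hr.
  pose (f := fun t => ln t - 2 * (t - 1) / (t + 1)).
  pose (g := fun t => / t - 4 / ((t + 1) * (t + 1))).
  destruct (MVT_cor2 f g 1 r Hr) as [c [Hc Hcr]].
  { intros c Hc. apply is_derive_Reals. unfold f, g.
    auto_derive; [lra|]. field. lra. }
  assert (f 1 = 0) as H1.
  { unfold f. rewrite ln_1. field. }
  assert (0 <= g c).
  { unfold g. assert (0 < c) by lra.
    assert (/ c - 4 / ((c + 1) * (c + 1)) = (c-1)*(c-1) / (c * ((c+1)*(c+1)))) as -> by (field; lra).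
    apply Rmult_le_pos; [nra|]. apply Rlt_le, Rinv_0_lt_compat. nra. }
  assert (0 <= f r) by nra.
  unfold f in *. lra.
Qed.

Lemma key_xy (x y : R) : 0 < y -> y < x ->
  (x*x - y*y) / (ln (x*x) - ln (y*y)) <= (x+y)*(x+y)/4.
Proof.
  intros Hy Hxy.
  assert (Hr : 1 < x / y) by (apply (Rmult_lt_reg_r y); [lra|]; field_simplify; lra).
  pose proof (key_r _ Hr) as K.
  assert (E : ln (x*x) - ln (y*y) = 2 * ln (x / y)).
  { rewrite !ln_mult by lra. rewrite ln_div by lra. ring. }
  rewrite E.
  assert (0 < ln (x/y)) by (rewrite <- ln_1; apply ln_increasing; lra).
  assert (E2 : 2 * (x / y - 1) / (x / y + 1) = 2 * (x - y) / (x + y)) by (field; lra).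
  rewrite E2 in K.
  apply (Rmult_le_reg_r (2 * ln (x/y))); [lra|].
  unfold Rdiv at 1. rewrite Rmult_assoc, Rinv_l, Rmult_1_r by lra.
  apply (Rmult_le_compat_l ((x+y)*(x+y)/2)) in K; [|nra].
  assert (E3 : (x + y) * (x + y) / 2 * (2 * (x - y) / (x + y)) = x*x - y*y) by (field; lra).
  rewrite E3 in K. lra.
Qed.

Lemma Lbound (a b : R) : 0 < a -> 0 < b ->
  Lmean a b <= 1/2 * ((a+b)/2) + 1/2 * (sqrt a * sqrt b).
Proof.
  intros ha hb.
  pose proof (sqrt_lt_R0 a ha) as hx. pose proof (sqrt_lt_R0 b hb) as hy.
  pose proof (sqrt_sqrt a (Rlt_le _ _ ha)) as Ea.
  pose proof (sqrt_sqrt b (Rlt_le _ _ hb)) as Eb.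
  set (x := sqrt a) in *. set (y := sqrt b) in *. clearbody x y.
  unfold Lmean. destruct (Req_EM_T a b) as [->|Hne].
  - nra.
  - assert (x <> y) as Hxy by (intro H; apply Hne; rewrite <- Ea, <- Eb, H; ring).
    rewrite <- Ea, <- Eb.
    replace (1 / 2 * ((x * x + y * y) / 2) + 1 / 2 * (x * y)) with ((x+y)*(x+y)/4) by field.
    destruct (Rlt_or_le y x) as [H|H].
    + apply key_xy; lra.
    + assert (y > x) by lra.
      replace ((x * x - y * y) / (ln (x * x) - ln (y * y))) with ((y * y - x * x) / (ln (y * y) - ln (x * x))).
      * rewrite (Rplus_comm x y). apply key_xy; lra.
      * assert (ln (x*x) <> ln (y*y)).
        { intro E. apply ln_inv in E; nra. }
        field. lra.
Qed.

Lemma G_half (a b : R) : 0 < a -> 0 < b ->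
  sqrt a * sqrt b = exp (/2 * ln a + /2 * ln b).
Proof.
  intros ha hb. rewrite <- !Rpower_sqrt by lra. unfold Rpower. rewrite exp_plus. ring.
Qed.

Lemma G_exp (v a b : R) : Gmean v a b = exp ((1 - v) * ln a + v * ln b).
Proof. unfold Gmean, Rpower. rewrite exp_plus. ring. Qed.

Lemma exp_le (x y : R) : x <= y -> exp x <= exp y.
Proof. intros [H|H]; [apply Rlt_le, exp_increasing; exact H| rewrite H; lra]. Qed.

Theorem proposition3p1 (a b : R) (ha : 0 < a) (hb : 0 < b) :
  (forall v : R, 0 <= v <= 1/2 -> b <= a ->
     Lmean a b <= 1/2 * Amean v a b + 1/2 * Gmean v a b) /\
  (forall v : R, 1/2 <= v <= 1 -> a <= b ->
     Lmean a b <= 1/2 * Amean v a b + 1/2 * Gmean v a b).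
Proof.
  pose proof (Lbound a b ha hb) as HL. rewrite G_half in HL by lra.
  split; intros v Hv Hab; apply ln_le in Hab as Hl; try lra;
    eapply Rle_trans; try exact HL;
    unfold Amean; rewrite G_exp.
  - assert (exp (/ 2 * ln a + / 2 * ln b) <= exp ((1 - v) * ln a + v * ln b)).
    { apply exp_le. nra. }
    nra.
  - assert (exp (/ 2 * ln a + / 2 * ln b) <= exp ((1 - v) * ln a + v * ln b)).
    { apply exp_le. nra. }
    nra.
Qed.
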